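(* Let $T>0$, let $(\pi_n)$ be a sequence of regular partitions of $[0,T]$, i.e. $t^n_k=kT/N_n$ for $k=0,\dots,N_n$ with $(N_n)$ strictly increasing natural numbers, and let $X=\{X(t)\colon t\in[0,T]\}$ be a mean zero second order process satisfying (C1) and (C2) with constants $\gamma\in(0,1)$, $\kappa>0$. Then $$\mathbb{E}V^{(2)}_{N_n}(X,2)\longrightarrow\kappa^2(4-2^{2\gamma})T\qquad(n\to\infty),$$ where $V^{(2)}_{N_n}(X,2)=(T^{-1}N_n)^{2\gamma-1}\sum_{k=1}^{N_n-1}\big(X(t^n_{k+1})-2X(t^n_k)+X(t^n_{k-1})\big)^2$.
   Context: $\sigma_X^2(s,t)=\mathbb{E}[X(t)-X(s)]^2$. $\Psi$ is the class of continuous $\varphi\colon(0,T]\to[0,\infty)$ with $\varphi(h)\to0$, $L(h):=\varphi(h)/h\to\infty$, $hL(h)^3\to0$ as $h\downarrow0$. (C1): $\sigma_X(0,\delta)=O(\delta^\gamma)$ as $\delta\downarrow0$. (C2): for every $\varphi\in\Psi$, $\sup_{\varphi(\delta)\le t\le T-\delta}\sup_{0<h\le\delta}|\sigma_X(t,t+h)/(\kappa h^\gamma)-1|\to0$ as $\delta\downarrow0$. *)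

(* Defs.v *)
From Stdlib Require Import Reals Lra List.
Open Scope R_scope.

(* A mean-zero second order process X on [0,T] is represented by its
   covariance kernel K s t = E[X(s) X(t)], which is exactly the data
   determining all second moments of finite linear combinations. *)

(* E[(sum_i c_i X(t_i))^2] for the linear combination given as a list
   of (coefficient, time) pairs. *)
Definition sec_mom (K : R -> R -> R) (l : list (R * R)) : R :=
  fold_right Rplus 0
    (map (fun p => fold_right Rplus 0
            (map (fun q => fst p * fst q * K (snd p) (snd q)) l)) l).

Definition is_covariance (T : R) (K : R -> R -> R) : Prop :=
  (forall s t, 0 <= s <= T -> 0 <= t <= T -> K s t = K t s) /\
  (forall l : list (R * R),
      (forall p, In p l -> 0 <= snd p <= T) -> 0 <= sec_mom K l).

Definition sigma2 (K : R -> R -> R) (s t : R) : R :=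
  sec_mom K ((1, t) :: (-1, s) :: nil).
Definition sigma (K : R -> R -> R) (s t : R) : R := sqrt (sigma2 K s t).

Definition in_Psi (T : R) (phi : R -> R) : Prop :=
  (forall x, 0 < x <= T -> forall eps, eps > 0 -> exists d, d > 0 /\
      forall y, 0 < y <= T -> Rabs (y - x) < d -> Rabs (phi y - phi x) < eps) /\
  (forall h, 0 < h <= T -> 0 <= phi h) /\
  (forall eps, eps > 0 -> exists d, d > 0 /\
      forall h, 0 < h <= T -> h < d -> Rabs (phi h) < eps) /\
  (forall M, exists d, d > 0 /\
      forall h, 0 < h <= T -> h < d -> phi h / h > M) /\
  (forall eps, eps > 0 -> exists d, d > 0 /\
      forall h, 0 < h <= T -> h < d -> Rabs (h * (phi h / h) ^ 3) < eps).

Definition cond_C1 (T gamma : R) (K : R -> R -> R) : Prop :=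
  exists C d0, d0 > 0 /\
    forall delta, 0 < delta <= T -> delta < d0 ->
      sigma K 0 delta <= C * Rpower delta gamma.

Definition cond_C2 (T gamma kappa : R) (K : R -> R -> R) : Prop :=
  forall phi, in_Psi T phi ->
    forall eps, eps > 0 -> exists d0, d0 > 0 /\
      forall delta, 0 < delta <= T -> delta < d0 ->
        forall t h, phi delta <= t <= T - delta -> 0 < h <= delta ->
          Rabs (sigma K t (t + h) / (kappa * Rpower h gamma) - 1) <= eps.

Definition EV2 (T gamma : R) (K : R -> R -> R) (N : nat) : R :=
  let tk := fun k : nat => INR k * T / INR N in
  Rpower (INR N / T) (2 * gamma - 1) *
  fold_right Rplus 0
    (map (fun k => sec_mom K ((1, tk (S k)) :: (-2, tk k) :: (1, tk (pred k)) :: nil))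
         (seq 1 (N - 1))).

(* Main.v *)
Require Import Defs.
From Stdlib Require Import Reals.
From Stdlib Require Import Lra Lia List ZArith.
Import Defs.
Open Scope R_scope.

Definition qq (x : R) := sqrt (sqrt x).
Definition phi0 (x : R) := qq x ^ 3.

Lemma qq_pos x : 0 < x -> 0 < qq x.
Proof. intros; unfold qq; apply sqrt_lt_R0, sqrt_lt_R0; lra. Qed.
Lemma qq_nn x : 0 <= qq x.
Proof. unfold qq; apply sqrt_pos. Qed.
Lemma qq4 x : 0 <= x -> qq x ^ 4 = x.
Proof.
  intros; unfold qq.
  replace (sqrt (sqrt x) ^ 4) with ((sqrt (sqrt x) ^ 2) ^ 2) by ring.
  rewrite pow2_sqrt by apply sqrt_pos. apply pow2_sqrt; auto.
Qed.
Lemma qq_e4 e : 0 <= e -> qq (e ^ 4) = e.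
Proof.
  intros; unfold qq. replace (e ^ 4) with ((e^2)^2) by ring.
  rewrite sqrt_pow2 by (apply pow2_ge_0). apply sqrt_pow2; auto.
Qed.
Lemma qq_le x y : x <= y -> qq x <= qq y.
Proof. intros; unfold qq; apply sqrt_le_1_alt, sqrt_le_1_alt; auto. Qed.
Lemma qq_lt x e : 0 <= x -> 0 < e -> x < e ^ 4 -> qq x < e.
Proof.
  intros. rewrite <- (qq_e4 e) by lra. unfold qq.
  apply sqrt_lt_1_alt. split. apply sqrt_pos. apply sqrt_lt_1_alt. lra.
Qed.

Lemma phi0_in_Psi T : 0 < T -> in_Psi T phi0.
Proof.
  intros HT. unfold in_Psi. split; [|split; [|split; [|split]]].
  - intros x Hx eps Heps.
    assert (Hc : continuity_pt (fun y => qq y * (qq y * qq y)) x).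
    { assert (Hq : continuity_pt qq x).
      { unfold qq. apply (continuity_pt_comp sqrt sqrt x).
        apply continuity_pt_sqrt; lra. apply continuity_pt_sqrt. apply sqrt_pos. }
      apply continuity_pt_mult; auto. apply continuity_pt_mult; auto. }
    destruct (Hc eps Heps) as [a [Ha H]]. exists a; split; auto.
    intros y Hy Hyx. destruct (Req_dec y x) as [->|Hne].
    + unfold Rminus; rewrite Rplus_opp_r, Rabs_R0; auto.
    + assert (H1 := H y). simpl in H1. unfold R_dist in H1. unfold phi0. simpl.
      replace (qq y * (qq y * (qq y * 1)) - qq x * (qq x * (qq x * 1)))
        with (qq y * (qq y * qq y) - qq x * (qq x * qq x)) by ring.
      apply H1. split. split. exact I. auto. auto.
  - intros h _. unfold phi0. apply pow_le, qq_nn.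
  - intros eps Heps. set (e := Rmin eps 1).
    assert (He : 0 < e) by (unfold e; apply Rmin_glb_lt; lra).
    assert (He1 : e <= 1) by apply Rmin_r. assert (He2 : e <= eps) by apply Rmin_l.
    exists (e ^ 4). split. apply pow_lt; auto.
    intros h Hh Hhd. unfold phi0. assert (Hq := qq_lt h e ltac:(lra) He Hhd).
    assert (Hq0 := qq_nn h).
    rewrite Rabs_right by (apply Rle_ge, pow_le; auto).
    assert (qq h ^ 3 <= qq h).
    { simpl. rewrite Rmult_1_r. assert (qq h * qq h <= 1) by nra. nra. }
    lra.
  - intros M. set (e := / (Rabs M + 1)).
    assert (He : 0 < e) by (unfold e; apply Rinv_0_lt_compat; pose proof (Rabs_pos M); lra).
    exists (e ^ 4). split. apply pow_lt; auto.
    intros h Hh Hhd. unfold phi0. assert (Hq := qq_lt h e ltac:(lra) He Hhd).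
    assert (Hq0 := qq_pos h ltac:(lra)).
    rewrite <- (qq4 h) at 2 by lra.
    replace (qq h ^ 3 / qq h ^ 4) with (/ qq h) by (field; lra).
    assert (/ e <= / qq h) by (apply Rinv_le_contravar; lra).
    unfold e in H. rewrite Rinv_inv in H. pose proof (Rle_abs M). lra.
  - intros eps Heps. exists (eps ^ 4). split. apply pow_lt; auto.
    intros h Hh Hhd. assert (Hq := qq_lt h eps ltac:(lra) Heps Hhd).
    assert (Hq0 := qq_pos h ltac:(lra)). unfold phi0.
    assert (H4 := qq4 h ltac:(lra)).
    replace (h * (qq h ^ 3 / h) ^ 3) with (qq h).
    rewrite Rabs_right; lra.
    set (q := qq h) in *. rewrite <- H4. field; lra.
Qed.

Ltac inT := let H := fresh in simpl; intros ? H; repeat (destruct H as [<-|H]; [simpl; lra|]); destruct H.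

Lemma sm3_id K T a b c : is_covariance T K -> 0 <= a <= T -> 0 <= b <= T -> 0 <= c <= T ->
  sec_mom K ((1,a)::(-2,b)::(1,c)::nil) = 2*sigma2 K b a + 2*sigma2 K c b - sigma2 K c a.
Proof.
  intros [Hs _] Ha Hb Hc. unfold sigma2, sec_mom; simpl.
  pose proof (Hs a b Ha Hb). pose proof (Hs a c Ha Hc). pose proof (Hs b c Hb Hc). lra.
Qed.

Lemma sm3_nn K T a b c : is_covariance T K -> 0 <= a <= T -> 0 <= b <= T -> 0 <= c <= T ->
  0 <= sec_mom K ((1,a)::(-2,b)::(1,c)::nil).
Proof. intros [_ Hp] Ha Hb Hc. apply Hp. inT. Qed.

Lemma sigma2_nn K T s t : is_covariance T K -> 0 <= s <= T -> 0 <= t <= T -> 0 <= sigma2 K s t.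
Proof. intros [_ Hp] Ha Hb. apply Hp. inT. Qed.

Lemma sigma2_00 K : sigma2 K 0 0 = 0.
Proof. unfold sigma2, sec_mom; simpl. ring. Qed.

Lemma sm3_bad K T a b c : is_covariance T K -> 0 <= T -> 0 <= a <= T -> 0 <= b <= T -> 0 <= c <= T ->
  sec_mom K ((1,a)::(-2,b)::(1,c)::nil) <= 4*(sigma2 K 0 a + 2*sigma2 K 0 b + sigma2 K 0 c).
Proof.
  intros [Hs Hp] HT Ha Hb Hc.
  assert (H0 : 0 <= 0 <= T) by lra.
  assert (P1 : 0 <= sec_mom K ((1,a)::(1,b)::(-2,0)::nil)) by (apply Hp; inT).
  assert (P2 : 0 <= sec_mom K ((1,b)::(1,c)::(-2,0)::nil)) by (apply Hp; inT).
  assert (P3 : 0 <= sec_mom K ((1,a)::(-1,c)::nil)) by (apply Hp; inT).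
  unfold sigma2, sec_mom in *; simpl in *.
  pose proof (Hs a b Ha Hb). pose proof (Hs a c Ha Hc). pose proof (Hs b c Hb Hc).
  pose proof (Hs a 0 Ha H0). pose proof (Hs b 0 Hb H0). pose proof (Hs c 0 Hc H0).
  lra.
Qed.

Lemma sum_bound (f : nat -> R) (c e A : R) (K0 : nat) : 0 <= e -> 0 <= A ->
  forall n s,
  (forall k, (s <= k < s + n)%nat -> (K0 <= k)%nat -> Rabs (f k - c) <= e) ->
  (forall k, (s <= k < s + n)%nat -> (k < K0)%nat -> Rabs (f k - c) <= e + A) ->
  Rabs (fold_right Rplus 0 (map f (seq s n)) - INR n * c) <= INR n * e + A * INR (K0 - s).
Proof.
  intros He HA n. induction n as [|n IH]; intros s H1 H2.
  - simpl. replace (0 - 0 * c) with 0 by ring. rewrite Rabs_R0, Rmult_0_l, Rplus_0_l.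
    apply Rmult_le_pos; auto; apply pos_INR.
  - simpl map. simpl fold_right.
    assert (IH' := IH (S s) ltac:(intros; apply H1; lia) ltac:(intros; apply H2; lia)).
    rewrite S_INR.
    replace (f s + fold_right Rplus 0 (map f (seq (S s) n)) - (INR n + 1) * c)
      with ((f s - c) + (fold_right Rplus 0 (map f (seq (S s) n)) - INR n * c)) by ring.
    eapply Rle_trans. apply Rabs_triang.
    destruct (Nat.lt_ge_cases s K0) as [Hl|Hl].
    + assert (Hf := H2 s ltac:(lia) Hl).
      replace (K0 - s)%nat with (S (K0 - S s)) by lia. rewrite S_INR. lra.
    + assert (Hf := H1 s ltac:(lia) Hl).
      replace (K0 - s)%nat with 0%nat by lia. replace (K0 - S s)%nat with 0%nat in IH' by lia.
      simpl in *. lra.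
Qed.

Lemma abs_le_inv x a : Rabs x <= a -> -a <= x <= a.
Proof. intros H. split. pose proof (Rle_abs (-x)); rewrite Rabs_Ropp in *; lra. pose proof (Rle_abs x); lra. Qed.

Lemma abs_le_intro x a : -a <= x <= a -> Rabs x <= a.
Proof. intros; apply Rabs_le; lra. Qed.

Lemma Rpower_pos x g : 0 < Rpower x g.
Proof. unfold Rpower; apply exp_pos. Qed.

Lemma Rpower_sq x g : Rpower x g ^ 2 = Rpower x (2 * g).
Proof. replace (2 * g) with (g + g) by ring. rewrite Rpower_plus. ring. Qed.

Lemma sq_approx s m e : 0 < m -> 0 <= s -> Rabs (s / m - 1) <= e -> e <= 1 ->
  Rabs (s ^ 2 - m ^ 2) <= 3 * e * m ^ 2.
Proof.
  intros Hm Hs H He. set (w := s / m - 1) in *.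
  assert (Hsw : s = m * (1 + w)) by (unfold w; field; lra).
  apply abs_le_inv in H. rewrite Hsw.
  assert (0 <= m^2) by nra.
  apply abs_le_intro. replace ((m * (1 + w)) ^ 2 - m ^ 2) with (m^2 * (2*w + w*w)) by ring.
  assert (w*w <= e * e) by nra. assert (0 <= w * w) by nra.
  assert (e * e <= e) by nra.
  assert (-3*e <= 2*w + w*w <= 3*e) by lra.
  split.
  - replace (-(3 * e * m ^ 2)) with (m^2 * (-3*e)) by ring. apply Rmult_le_compat_l; lra.
  - replace (3 * e * m ^ 2) with (m^2 * (3*e)) by ring. apply Rmult_le_compat_l; lra.
Qed.

Lemma P_times_u T g N : 0 < T -> (0 < N)%nat ->
  Rpower (INR N / T) (2 * g - 1) * Rpower (T / INR N) (2 * g) = T / INR N.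
Proof.
  intros HT HN. assert (0 < INR N) by (apply lt_0_INR; auto).
  assert (Hh : 0 < T / INR N) by (apply Rdiv_lt_0_compat; auto).
  unfold Rpower. rewrite <- exp_plus.
  replace (INR N / T) with (/ (T / INR N)) by (field; lra).
  rewrite ln_Rinv by auto.
  replace ((2 * g - 1) * - ln (T / INR N) + 2 * g * ln (T / INR N)) with (ln (T / INR N)) by ring.
  apply exp_ln; auto.
Qed.



Lemma phi0_le x y : x <= y -> phi0 x <= phi0 y.
Proof. intros; unfold phi0; apply pow_incr; split; [apply qq_nn| apply qq_le; auto]. Qed.

Lemma sig0_bound T g K C d1 t B : 0 < T -> is_covariance T K -> 0 < g ->
  (forall delta, 0 < delta <= T -> delta < d1 -> sigma K 0 delta <= C * Rpower delta g) ->
  0 <= t <= T -> t <= B -> B < d1 -> sigma2 K 0 t <= C ^ 2 * Rpower B (2 * g).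
Proof.
  intros HT Hc Hg HC1 Ht HtB HB.
  destruct (Req_dec t 0) as [->|Hne].
  - rewrite sigma2_00. apply Rmult_le_pos. apply pow2_ge_0. left; apply Rpower_pos.
  - assert (H := HC1 t ltac:(lra) ltac:(lra)).
    assert (Hs0 : 0 <= sigma K 0 t) by apply sqrt_pos.
    assert (Hsq : sigma2 K 0 t = sigma K 0 t ^ 2).
    { unfold sigma. rewrite pow2_sqrt; auto. apply (sigma2_nn K T); auto; lra. }
    rewrite Hsq.
    assert (sigma K 0 t ^ 2 <= (C * Rpower t g) ^ 2) by (apply pow_incr; lra).
    rewrite Rpow_mult_distr, Rpower_sq in H0.
    assert (Rpower t (2*g) <= Rpower B (2*g)) by (apply Rle_Rpower_l; lra).
    assert (0 <= C^2) by apply pow2_ge_0. nra.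
Qed.

Lemma exists_K0 x : 0 < x -> exists K0 : nat, x <= INR K0 <= x + 1.
Proof.
  intros Hx. destruct (archimed x) as [H1 H2].
  exists (Z.to_nat (up x)). rewrite INR_IZR_INZ, Z2Nat.id. lra.
  apply le_IZR. lra.
Qed.

Lemma approx_pair (T g kap e1 d0 : R) (K : R -> R -> R) delta t h :
  is_covariance T K -> 0 < kap -> e1 <= 1 ->
  (forall delta, 0 < delta <= T -> delta < d0 ->
      forall t h, phi0 delta <= t <= T - delta -> 0 < h <= delta ->
      Rabs (sigma K t (t + h) / (kap * Rpower h g) - 1) <= e1) ->
  0 < delta <= T -> delta < d0 -> phi0 delta <= t <= T - delta -> 0 < h <= delta -> 0 <= t ->
  Rabs (sigma2 K t (t + h) - kap ^ 2 * Rpower h (2 * g)) <= 3 * e1 * (kap ^ 2 * Rpower h (2 * g)).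
Proof.
  intros Hcov Hk He1 HC2 Hd Hd0 Ht Hh Ht0.
  assert (H := HC2 delta Hd Hd0 t h Ht Hh).
  assert (Hm : 0 < kap * Rpower h g) by (apply Rmult_lt_0_compat; [lra| apply Rpower_pos]).
  assert (Hsq := sq_approx _ _ _ Hm (sqrt_pos _) H He1).
  unfold sigma in Hsq. rewrite pow2_sqrt in Hsq.
  - rewrite Rpow_mult_distr, Rpower_sq in Hsq. exact Hsq.
  - apply (sigma2_nn K T); auto; lra.
Qed.

Lemma core (T g kap C d1 e1 d0 : R) (K : R -> R -> R) (N : nat) :
  0 < T -> is_covariance T K -> 0 < g < 1 -> 0 < kap ->
  (forall delta, 0 < delta <= T -> delta < d1 -> sigma K 0 delta <= C * Rpower delta g) ->
  0 < e1 <= 1 ->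
  (forall delta, 0 < delta <= T -> delta < d0 ->
      forall t h, phi0 delta <= t <= T - delta -> 0 < h <= delta ->
      Rabs (sigma K t (t + h) / (kap * Rpower h g) - 1) <= e1) ->
  (2 <= N)%nat ->
  qq (2 * (T / INR N)) <= 1 -> qq (2 * (T / INR N)) < d0 -> 2 * qq (2 * (T / INR N)) < d1 ->
  Rabs (EV2 T g K N - kap ^ 2 * (4 - Rpower 2 (2 * g)) * T) <=
    24 * kap^2 * e1 * T + 32 * (16 * C^2 + 8 * kap^2) * qq (2 * (T / INR N)).
Proof.
  intros HT Hcov Hg Hk HC1 He1 HC2 HN Hr1 Hrd0 Hrd1.
  assert (HN0 : 2 <= INR N) by (replace 2 with (INR 2) by (simpl; ring); apply le_INR; auto).
  set (h := T / INR N) in *.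
  assert (Hh : 0 < h) by (unfold h; apply Rdiv_lt_0_compat; lra).
  assert (HhN : h * INR N = T) by (unfold h; field; lra).
  set (r := qq (2 * h)) in *.
  assert (Hr4 : r ^ 4 = 2 * h) by (apply qq4; lra).
  assert (Hr : 0 < r) by (apply qq_pos; lra).
  assert (Hc4 : Rpower 2 (2 * g) < 4).
  { replace 4 with (Rpower 2 (INR 2)). apply Rpower_lt. lra. simpl; lra.
    rewrite Rpower_pow by lra. ring. }
  set (c := 4 - Rpower 2 (2 * g)).
  assert (Hc : 0 < c <= 4) by (unfold c; pose proof (Rpower_pos 2 (2*g)); lra).
  set (u := Rpower h (2 * g)).
  assert (Hu : 0 < u) by apply Rpower_pos.
  set (P := Rpower (INR N / T) (2 * g - 1)).
  assert (HP : 0 < P) by apply Rpower_pos.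
  assert (HPu : P * u = h) by (apply P_times_u; [lra|lia]).
  destruct (exists_K0 (2 / r + 1)) as [K0 HK0].
  { assert (0 < 2 / r) by (apply Rdiv_lt_0_compat; lra). lra. }
  assert (H2r : 0 < 2 / r) by (apply Rdiv_lt_0_compat; lra).
  assert (HK0h : INR K0 * h <= 2 * r).
  { assert (INR K0 * h <= (2 / r + 2) * (r^4 / 2)) by (rewrite Hr4; nra).
    replace ((2 / r + 2) * (r ^ 4 / 2)) with (r^3 + r^4) in H by (field; lra).
    assert (r^3 <= r) by (simpl; nra). assert (r^4 <= r) by (simpl; nra). lra. }
  assert (HK0r : INR K0 * r <= 4).
  { assert (INR K0 * r <= (2/r + 2) * r) by nra.
    replace ((2/r+2)*r) with (2 + 2 * r) in H by (field; lra). lra. }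
  assert (Hphi : phi0 (2 * h) <= (INR K0 - 1) * h).
  { unfold phi0. fold r.
    assert (2 / r * h <= (INR K0 - 1) * h) by (apply Rmult_le_compat_r; lra).
    replace (2 / r * h) with (r ^ 3) in H.  auto.
    replace h with (r^4/2) by lra. field. lra. }
  set (c0 := u * kap^2 * c).
  set (e := 24 * kap^2 * e1 * u).
  set (A := 16 * C^2 * Rpower (INR K0 * h) (2 * g) + c0).
  set (f := fun k => sec_mom K ((1, INR (S k) * T / INR N) :: (-2, INR k * T / INR N)
                               :: (1, INR (pred k) * T / INR N) :: nil)).
  assert (HEV : EV2 T g K N = P * fold_right Rplus 0 (map f (seq 1 (N - 1)))) by reflexivity.
  assert (Hsum : Rabs (fold_right Rplus 0 (map f (seq 1 (N - 1))) - INR (N - 1) * c0)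
                 <= INR (N - 1) * e + A * INR (K0 - 1)).
  { apply sum_bound.
    - unfold e. assert (0 < kap^2) by (apply pow_lt; lra). 
      apply Rmult_le_pos; [|lra]. apply Rmult_le_pos; [|lra]. lra.
    - unfold A, c0. assert (0 < kap^2) by (apply pow_lt; lra).
      assert (0 <= Rpower (INR K0 * h) (2 * g)) by (left; apply Rpower_pos).
      assert (0 <= C^2) by apply pow2_ge_0.
      assert (0 < u * kap^2 * c) by (apply Rmult_lt_0_compat; [apply Rmult_lt_0_compat|]; lra). nra.
    - intros k Hkr HKk.
      assert (HkR1 : 1 <= INR k) by (replace 1 with (INR 1) by reflexivity; apply le_INR; lia).
      assert (HkRN : INR k + 1 <= INR N) by (rewrite <- S_INR; apply le_INR; lia).
      assert (HN0' : INR N <> 0) by lra.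
      set (b := INR k * h).
      assert (E1 : INR (S k) * T / INR N = b + h) by (unfold b; rewrite S_INR, <- HhN; field; lra).
      assert (E2 : INR k * T / INR N = b) by (unfold b; rewrite <- HhN; field; lra).
      assert (E3 : INR (pred k) * T / INR N = b - h).
      { destruct k as [|k']; [lia|]. unfold b. simpl pred. rewrite S_INR, <- HhN. field; lra. }
      assert (Hb0 : h <= b) by (unfold b; nra).
      assert (HbT : b + h <= T) by (unfold b; rewrite <- HhN; nra).
      unfold f. rewrite E1, E2, E3.

      assert (H2hT : 2 * h <= T) by (rewrite <- HhN; nra).
      assert (Hr4r : r ^ 4 <= r).
      { assert (r*r <= 1) by nra. assert (r*r*r <= 1) by nra.
        replace (r^4) with (r*r*r*r) by ring. nra. }
      assert (HKk' : INR K0 <= INR k) by (apply le_INR; lia).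
      assert (Hphb : phi0 (2 * h) <= b - h) by (unfold b; nra).
      assert (Hph1 : phi0 h <= phi0 (2 * h)) by (apply phi0_le; lra).
      rewrite (sm3_id K T (b + h) b (b - h) Hcov) by lra.
      assert (S1 := approx_pair T g kap e1 d0 K h b h Hcov Hk ltac:(lra) HC2
                      ltac:(lra) ltac:(lra) ltac:(lra) ltac:(lra) ltac:(lra)).
      assert (S2 := approx_pair T g kap e1 d0 K h (b - h) h Hcov Hk ltac:(lra) HC2
                      ltac:(lra) ltac:(lra) ltac:(lra) ltac:(lra) ltac:(lra)).
      assert (S3 := approx_pair T g kap e1 d0 K (2 * h) (b - h) (2 * h) Hcov Hk ltac:(lra) HC2
                      ltac:(lra) ltac:(lra) ltac:(lra) ltac:(lra) ltac:(lra)).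
      replace (b - h + h) with b in S2 by ring.
      replace (b - h + 2 * h) with (b + h) in S3 by ring.
      fold u in S1, S2.
      rewrite <- Rpower_mult_distr in S3 by lra. fold u in S3.
      set (Y := Rpower 2 (2 * g)) in *.
      assert (HY : 0 < Y) by apply Rpower_pos.
      assert (HX : 0 < kap^2 * u) by (apply Rmult_lt_0_compat; [apply pow_lt|]; lra).
      replace (kap ^ 2 * (Y * u)) with (Y * (kap^2 * u)) in S3 by ring.
      assert (HYX : 3 * e1 * (Y * (kap ^ 2 * u)) <= 12 * e1 * (kap^2 * u)).
      { assert (0 < e1 * (kap^2 * u)) by (apply Rmult_lt_0_compat; lra). nra. }
      apply abs_le_inv in S1. apply abs_le_inv in S2. apply abs_le_inv in S3.
      apply abs_le_intro. unfold c0, e, c. fold Y. lra.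
    - intros k Hkr HKk.
      assert (HkR1 : 1 <= INR k) by (replace 1 with (INR 1) by reflexivity; apply le_INR; lia).
      assert (HkRN : INR k + 1 <= INR N) by (rewrite <- S_INR; apply le_INR; lia).
      assert (HN0' : INR N <> 0) by lra.
      set (b := INR k * h).
      assert (E1 : INR (S k) * T / INR N = b + h) by (unfold b; rewrite S_INR, <- HhN; field; lra).
      assert (E2 : INR k * T / INR N = b) by (unfold b; rewrite <- HhN; field; lra).
      assert (E3 : INR (pred k) * T / INR N = b - h).
      { destruct k as [|k']; [lia|]. unfold b. simpl pred. rewrite S_INR, <- HhN. field; lra. }
      assert (Hb0 : h <= b) by (unfold b; nra).
      assert (HbT : b + h <= T) by (unfold b; rewrite <- HhN; nra).
      unfold f. rewrite E1, E2, E3.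
      assert (HkK : INR k + 1 <= INR K0) by (rewrite <- S_INR; apply le_INR; lia).
      assert (HB : b + h <= INR K0 * h) by (unfold b; nra).
      assert (HBd : INR K0 * h < d1) by lra.
      assert (F0 := sm3_nn K T (b + h) b (b - h) Hcov ltac:(lra) ltac:(lra) ltac:(lra)).
      assert (Fb := sm3_bad K T (b + h) b (b - h) Hcov ltac:(lra) ltac:(lra) ltac:(lra) ltac:(lra)).
      assert (G1 := sig0_bound T g K C d1 (b + h) (INR K0 * h) HT Hcov ltac:(lra) HC1 ltac:(lra) ltac:(lra) HBd).
      assert (G2 := sig0_bound T g K C d1 b (INR K0 * h) HT Hcov ltac:(lra) HC1 ltac:(lra) ltac:(lra) HBd).
      assert (G3 := sig0_bound T g K C d1 (b - h) (INR K0 * h) HT Hcov ltac:(lra) HC1 ltac:(lra) ltac:(lra) HBd).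
      assert (Hc0' : 0 <= c0).
      { unfold c0. assert (0 < kap^2) by (apply pow_lt; lra).
        left; apply Rmult_lt_0_compat; [apply Rmult_lt_0_compat|]; lra. }
      assert (He0 : 0 <= e).
      { unfold e. assert (0 < kap^2) by (apply pow_lt; lra).
        apply Rmult_le_pos; [|lra]. apply Rmult_le_pos; [|lra]. lra. }
      apply abs_le_intro. unfold A. lra. }
  assert (H2r2 : 2 <= 2 / r).
  { assert (2 / r * r = 2) by (field; lra). nra. }
  assert (HK03 : 3 <= INR K0) by lra.
  assert (HNm : INR (N - 1) = INR N - 1) by (rewrite minus_INR by lia; simpl; ring).
  assert (HK0m : INR (K0 - 1) <= INR K0) by (apply le_INR; lia).
  assert (Htarget : kap ^ 2 * c * T = P * INR N * c0)
    by (unfold c0; rewrite <- HhN, <- HPu; ring).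
  fold c. rewrite HEV, Htarget.
  replace (P * fold_right Rplus 0 (map f (seq 1 (N - 1))) - P * INR N * c0)
    with (P * (fold_right Rplus 0 (map f (seq 1 (N - 1))) - INR (N - 1) * c0) - P * c0)
    by (rewrite HNm; ring).
  assert (Hc0 : 0 < c0) by (unfold c0; assert (0 < kap^2) by (apply pow_lt; lra);
                            apply Rmult_lt_0_compat; [apply Rmult_lt_0_compat|]; lra).
  eapply Rle_trans. apply Rabs_triang. rewrite Rabs_Ropp, Rabs_mult.
  rewrite (Rabs_right P) by lra. rewrite (Rabs_right (P * c0)) by nra.
  assert (Hk2 : 0 < kap^2) by (apply pow_lt; lra).
  assert (HCC : 0 <= C^2) by apply pow2_ge_0.
  assert (HPc0 : P * c0 = h * kap^2 * c) by (unfold c0; rewrite <- HPu; ring).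
  assert (HPe : P * (INR (N - 1) * e) <= 24 * kap^2 * e1 * T).
  { rewrite HNm. unfold e. rewrite <- HhN, <- HPu.
    assert (0 <= 24 * kap ^ 2 * e1 * P * u) by (apply Rmult_le_pos; [|lra]; apply Rmult_le_pos; [|lra]; nra).
    nra. }
  assert (HRK : Rpower (INR K0 * h) (2 * g) = Rpower (INR K0) (2 * g) * u)
    by (unfold u; rewrite Rpower_mult_distr; auto; lra).
  assert (HRK2 : Rpower (INR K0) (2 * g) <= INR K0 ^ 2).
  { rewrite <- Rpower_pow by lra. apply Rle_Rpower. lra. simpl; lra. }
  assert (HPA : P * A <= 16 * C^2 * h * INR K0 ^ 2 + 4 * kap^2 * h).
  { unfold A. rewrite Rmult_plus_distr_l, HPc0, HRK.
    replace (P * (16 * C ^ 2 * (Rpower (INR K0) (2 * g) * u)))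
      with (16 * C^2 * (P * u) * Rpower (INR K0) (2 * g)) by ring. rewrite HPu.
    assert (16 * C ^ 2 * h * Rpower (INR K0) (2 * g) <= 16 * C ^ 2 * h * INR K0 ^ 2).
    { apply Rmult_le_compat_l; auto. nra. }
    assert (h * kap ^ 2 * c <= 4 * kap ^ 2 * h).
    { replace (4 * kap^2 * h) with (h * kap^2 * 4) by ring. apply Rmult_le_compat_l; nra. }
    lra. }
  assert (HA0 : 0 <= P * A).
  { unfold A. apply Rmult_le_pos. lra. assert (0 <= Rpower (INR K0 * h) (2 * g)) by (left; apply Rpower_pos). nra. }
  assert (HPAK : P * (A * INR (K0 - 1)) <= 16 * C^2 * h * INR K0 ^ 3 + 4 * kap^2 * h * INR K0).
  { replace (P * (A * INR (K0 - 1))) with ((P * A) * INR (K0 - 1)) by ring.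
    apply Rle_trans with ((P * A) * INR K0). apply Rmult_le_compat_l; auto.
    replace (16 * C ^ 2 * h * INR K0 ^ 3 + 4 * kap ^ 2 * h * INR K0) with
      ((16 * C ^ 2 * h * INR K0 ^ 2 + 4 * kap ^ 2 * h) * INR K0) by ring.
    apply Rmult_le_compat_r; lra. }
  assert (Hh3 : h * INR K0 ^ 3 <= 32 * r).
  { replace h with (r^4/2) by lra.
    replace (r ^ 4 / 2 * INR K0 ^ 3) with (r * (INR K0 * r)^3 / 2) by (unfold Rdiv; ring).
    assert ((INR K0 * r)^3 <= 4^3) by (apply pow_incr; nra). nra. }
  assert (HK1 : h * (INR K0 + 1) <= 2 * (h * INR K0 ^ 3)).
  { assert (INR K0 + 1 <= 2 * INR K0 ^ 3) by (simpl; nra). nra. }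
  apply Rle_trans with (24 * kap^2 * e1 * T + (16 * C^2 + 8 * kap^2) * (h * INR K0 ^ 3)).
  - assert (P * c0 <= 4 * kap^2 * h).
    { rewrite HPc0. replace (4 * kap^2 * h) with (h * kap^2 * 4) by ring. apply Rmult_le_compat_l; nra. }
    assert (P * (INR (N - 1) * e + A * INR (K0 - 1)) =
            P * (INR (N - 1) * e) + P * (A * INR (K0 - 1))) by ring.
    assert (Rabs (fold_right Rplus 0 (map f (seq 1 (N - 1))) - INR (N - 1) * c0) * P <=
            (INR (N - 1) * e + A * INR (K0 - 1)) * P) by (apply Rmult_le_compat_r; lra).
    nra.
  - assert ((16 * C ^ 2 + 8 * kap ^ 2) * (h * INR K0 ^ 3) <= (16 * C ^ 2 + 8 * kap ^ 2) * (32 * r))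
      by (apply Rmult_le_compat_l; lra). lra.
Qed.

Lemma N_ge (N : nat -> nat) : (forall n, (N n < N (S n))%nat) -> forall n, (n <= N n)%nat.
Proof. intros H n; induction n; [lia|]. specialize (H n). lia. Qed.

Theorem corollary1 (T gamma kappa : R) (N : nat -> nat) (K : R -> R -> R) :
  0 < T ->
  (forall n, (N n < N (S n))%nat) ->
  is_covariance T K ->
  0 < gamma < 1 -> 0 < kappa ->
  cond_C1 T gamma K ->
  cond_C2 T gamma kappa K ->
  Un_cv (fun n => EV2 T gamma K (N n))
        (kappa ^ 2 * (4 - Rpower 2 (2 * gamma)) * T).
Proof.
  intros HT HN Hcov Hg Hk HC1 HC2 eps Heps.
  destruct HC1 as [C [d1 [Hd1 HC1]]].
  assert (Hk2 : 0 < kappa ^ 2) by (apply pow_lt; lra).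
  assert (Hden : 0 < 48 * kappa ^ 2 * T) by (apply Rmult_lt_0_compat; lra).
  set (e1 := Rmin 1 (eps / (48 * kappa ^ 2 * T))).
  assert (He1 : 0 < e1) by (unfold e1; apply Rmin_glb_lt; [lra| apply Rdiv_lt_0_compat; lra]).
  assert (He11 : e1 <= 1) by apply Rmin_l.
  assert (He12 : e1 <= eps / (48 * kappa ^ 2 * T)) by apply Rmin_r.
  destruct (HC2 phi0 (phi0_in_Psi T HT) e1 He1) as [d0 [Hd0 HC2']].
  set (B := 16 * C ^ 2 + 8 * kappa ^ 2).
  assert (HB : 0 < B) by (unfold B; pose proof (pow2_ge_0 C); lra).
  set (e := Rmin (Rmin 1 (d0 / 2)) (Rmin (d1 / 4) (eps / (64 * B)))).
  assert (He : 0 < e).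
  { unfold e. apply Rmin_glb_lt; apply Rmin_glb_lt; try lra. apply Rdiv_lt_0_compat; lra. }
  assert (Hea : e <= 1 /\ e <= d0 / 2 /\ e <= d1 / 4 /\ e <= eps / (64 * B)).
  { unfold e. repeat split.
    - eapply Rle_trans; apply Rmin_l.
    - eapply Rle_trans; [apply Rmin_l| apply Rmin_r].
    - eapply Rle_trans; [apply Rmin_r| apply Rmin_l].
    - eapply Rle_trans; apply Rmin_r. }
  assert (He4 : 0 < e ^ 4) by (apply pow_lt; lra).
  destruct (INR_unbounded (2 * T / e ^ 4)) as [M HM].
  exists (max M 2). intros n Hn.
  assert (HNn := N_ge N HN n).
  set (m := N n) in *.
  assert (Hm2 : (2 <= m)%nat) by lia.
  assert (HmM : INR M <= INR m) by (apply le_INR; lia).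
  assert (Hm0 : 0 < INR m) by (apply lt_0_INR; lia).
  assert (Hsmall : 2 * (T / INR m) < e ^ 4).
  { assert (2 * T < e ^ 4 * INR m).
    { assert (2 * T / e ^ 4 < INR m) by lra.
      apply (Rmult_lt_compat_l (e^4)) in H; auto.
      replace (e ^ 4 * (2 * T / e ^ 4)) with (2 * T) in H by (field; lra). lra. }
    replace (2 * (T / INR m)) with (2 * T / INR m) by (field; lra).
    apply (Rmult_lt_reg_r (INR m)); auto. replace (2 * T / INR m * INR m) with (2 * T) by (field; lra).
    lra. }
  assert (Hh : 0 <= 2 * (T / INR m)) by (left; apply Rmult_lt_0_compat; [lra| apply Rdiv_lt_0_compat; lra]).
  assert (Hr := qq_lt _ e Hh He Hsmall).
  set (r := qq (2 * (T / INR m))) in *.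
  assert (Hr0 := qq_nn (2 * (T / INR m))). fold r in Hr0.
  assert (Ha1 : r <= 1) by lra. assert (Ha2 : r < d0) by lra. assert (Ha3 : 2 * r < d1) by lra.
  assert (Hc := core T gamma kappa C d1 e1 d0 K m HT Hcov Hg Hk HC1 ltac:(lra) HC2' Hm2
                 Ha1 Ha2 Ha3).
  fold r in Hc.
  unfold R_dist.
  assert (24 * kappa ^ 2 * e1 * T <= eps / 2).
  { apply Rle_trans with (24 * kappa ^ 2 * T * (eps / (48 * kappa ^ 2 * T))).
    replace (24 * kappa ^ 2 * e1 * T) with (24 * kappa ^ 2 * T * e1) by ring.
    apply Rmult_le_compat_l; [nra|auto].
    right; field; lra. }
  assert (32 * B * r < eps / 2).
  { apply Rlt_le_trans with (32 * B * e). apply Rmult_lt_compat_l; lra.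
    apply Rle_trans with (32 * B * (eps / (64 * B))). apply Rmult_le_compat_l; lra.
    right; field; apply Rgt_not_eq; exact HB. }
  fold B in Hc. lra.
Qed.
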